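(* Let $D$ be a Dyck path of semilength $n$ with row-area sequence $(r_0,r_1,\dots,r_n)$ and column-area sequence $(c_1,\dots,c_{n+1})$, and let $\mathcal F=\{k\in\{1,\dots,n\}: r_{k+1+c_{k+1}}=r_{k-1}+c_{k+1}+2\}$. Let $\pi$ be the permutation associated with $D$ by the Billey–Jockusch–Stanley bijection. Then $k\in\mathcal F$ if and only if $\pi(k)=k$.
   Context: Work in an $n\times n$ array of unit cells; the cell $(i,j)$ is the one in column $i$ (columns numbered $1,\dots,n$ from left to right) and row $j$ (rows numbered $1,\dots,n$ from bottom to top), i.e. the square $[i-1,i]\times[j-1,j]$. A Dyck path of semilength $n$ is a lattice path from $(0,0)$ to $(n,n)$ with unit north and east steps that never goes below the line $y=x$. Row-area sequence: $r_0=-1$ and, for $1\le k\le n$, $r_k$ is the number of full cells in row $k$ strictly between the $k$-th north step of $D$ and the diagonal; equivalently, if the $k$-th north step lies on the vertical line $x=x_k$, then $r_k=k-1-x_k$. Column-area sequence: for $1\le k\le n$, $c_k$ is the number of full cells in column $k$ strictly between the $k$-th east step and the diagonal; equivalently, if the $k$-th east step lies at height $y_k$, then $c_k=y_k-k$; and $c_{n+1}=-1$ (so $1\le k+1+c_{k+1}\le n$ for all $1\le k\le n$). A valley of $D$ is an east step immediately followed by a north step; if the east step is the $k$-th east step and the north step is the $\ell$-th north step, the valley is at position $(k,\ell)$, the cell enclosed by these two steps. Billey–Jockusch–Stanley bijection: put a cross in every valley cell of $D$; then, for the columns $i=1,2,\dots,n$ in this order, if column $i$ does not yet contain a cross, put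 a cross in the lowest cell of column $i$ whose row does not yet contain a cross. The crosses form a permutation matrix, and $\pi(i)$ is the row of the cross in column $i$. *)

(* Defs.v *)
From mathcomp Require Import all_boot all_order all_algebra.
Set Implicit Arguments. Unset Strict Implicit. Unset Printing Implicit Defensive.
Import GRing.Theory Num.Theory.

(* A lattice path is a sequence of steps: true = north step, false = east step. *)

Definition dyck (n : nat) (s : seq bool) : Prop :=
  [/\ size s = (n + n)%N, count id s = n &
      forall i, i <= size s -> count negb (take i s) <= count id (take i s)].

(* Number of steps of kind ~~b before the k-th (1-based) step of kind b. *)
Fixpoint opp_before (b : bool) (k : nat) (s : seq bool) : nat :=
  match s with
  | [::] => 0
  | c :: s' => if c == b then (if k <= 1 then 0 else opp_before b k.-1 s')
               else (opp_before b k s').+1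
  end.

(* x_k : abscissa of the vertical line carrying the k-th north step. *)
Definition xN (s : seq bool) (k : nat) : nat := opp_before true k s.
(* y_k : height of the k-th east step. *)
Definition yE (s : seq bool) (k : nat) : nat := opp_before false k s.

Definition row_area (s : seq bool) (k : nat) : int :=
  if k == 0%N then (-1)%R else (k%:Z - 1 - (xN s k)%:Z)%R.

Definition col_area (s : seq bool) (n k : nat) : int :=
  if k == n.+1 then (-1)%R else ((yE s k)%:Z - k%:Z)%R.

(* Valleys: an east step (the k-th) immediately followed by a north step
   (the l-th); recorded as the cell (k, l). *)
Definition valleys (s : seq bool) : seq (nat * nat) :=
  [seq (count negb (take i.+1 s), count id (take i.+2 s)) |
     i <- iota 0 (size s).-1 & (~~ nth true s i) && nth false s i.+1].

Definition valley_row (s : seq bool) (i : nat) : option nat :=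
  ohead [seq p.2 | p <- valleys s & p.1 == i].

(* Greedy step of the Billey-Jockusch-Stanley construction: process the
   columns in cols in order; a column with a valley keeps its valley cross,
   otherwise a cross is put in the lowest row (among 1..n) not yet
   containing a cross. *)
Fixpoint bjs_fill (s : seq bool) (n : nat) (cols : seq nat) (used : seq nat)
  : seq (nat * nat) :=
  match cols with
  | [::] => [::]
  | i :: cs =>
    match valley_row s i with
    | Some l => (i, l) :: bjs_fill s n cs used
    | None =>
      let r := head 0%N [seq j <- iota 1 n | j \notin used] in
      (i, r) :: bjs_fill s n cs (r :: used)
    end
  end.

Definition bjs_crosses (s : seq bool) (n : nat) : seq (nat * nat) :=
  bjs_fill s n (iota 1 n) [seq p.2 | p <- valleys s].

Definition bjs_perm (s : seq bool) (n : nat) (i : nat) : nat :=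
  head 0%N [seq p.2 | p <- bjs_crosses s n & p.1 == i].

(* Main.v *)
Require Import Defs.
From mathcomp Require Import all_boot all_order all_algebra zify.
Import GRing.Theory Num.Theory.

Lemma opp_formula b m s : 0 < m ->
  opp_before b m s = count (fun i => (nth b s i != b) &&
     (count (pred1 b) (take i s) < m)) (iota 0 (size s)).
Proof.
elim: s m => [|c s IH] m m0 //=.
rewrite -[1]/(1 + 0) iotaDl count_map /=.
case: eqP => [->|cb].
- rewrite /=. case: ifP => m1.
  + rewrite (eq_count (a2 := pred0)) ?count_pred0 // => i /=.
    rewrite eqxx /= add0n; apply/negbTE; lia.
  + rewrite IH; last by lia.
    apply: eq_count => i /=; rewrite eqxx /= add0n.
    apply/idP/idP; lia.
- have cb' : (c == b) = false by apply/eqP.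
  rewrite /= addn0 m0 add1n IH //; congr (_.+1); apply: eq_count => i /=.
  by rewrite cb' add0n.
Qed.

Section S.
Variable s : seq bool.
Definition Nc i := count id (take i s).
Definition Ec i := count negb (take i s).
Local Notation sn i := (nth false s i).

Lemma NcS i : i < size s -> Nc i.+1 = Nc i + sn i.
Proof. by move=> h; rewrite /Nc (take_nth false h) -cats1 count_cat /= addn0. Qed.
Lemma EcS i : i < size s -> Ec i.+1 = Ec i + ~~ sn i.
Proof. by move=> h; rewrite /Ec (take_nth false h) -cats1 count_cat /= addn0. Qed.
Lemma Nc_mono i j : i <= j -> Nc i <= Nc j.
Proof.
by move=> h; rewrite /Nc -[take j s](cat_take_drop i) take_takel // count_cat leq_addr.
Qed.
Lemma Ec_mono i j : i <= j -> Ec i <= Ec j.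
Proof.
by move=> h; rewrite /Ec -[take j s](cat_take_drop i) take_takel // count_cat leq_addr.
Qed.
Lemma NcEc i : i <= size s -> Nc i + Ec i = i.
Proof. by move=> h; rewrite /Nc /Ec -{3}(size_takel h) -(count_predC id). Qed.

Lemma count_pos (P : pred bool) m : m <= size s ->
  count (fun p => P (sn p)) (iota 0 m) = count P (take m s).
Proof.
elim: m => [|m IH] h; first by rewrite take0.
rewrite -addn1 iotaD count_cat IH; last by lia.
by rewrite addn1 (take_nth false h) -cats1 count_cat /= add0n.
Qed.

Lemma count_lower (P Q : pred nat) q : q <= size s ->
  (forall p, p < q -> Q p) ->
  count P (iota 0 q) <= count (fun p => P p && Q p) (iota 0 (size s)).
Proof.
move=> hq hQ; rewrite -(subnKC hq) iotaD count_cat.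
apply: leq_trans (leq_addr _ _).
rewrite leq_eqVlt; apply/orP; left; apply/eqP; apply: eq_in_count => p.
by rewrite mem_iota => /andP[_ hp]; rewrite hQ ?andbT.
Qed.

Lemma xN_form b : 0 < b ->
  xN s b = count (fun i => ~~ sn i && (Nc i < b)) (iota 0 (size s)).
Proof.
move=> b0; rewrite /xN opp_formula //; apply: eq_in_count => i.
rewrite mem_iota add0n => /andP[_ hi].
rewrite (set_nth_default false true hi) /Nc.
by congr (_ && (_ < _)); [case: (sn i) | apply: eq_count => x; case: x].
Qed.

Lemma yE_form b : 0 < b ->
  yE s b = count (fun i => sn i && (Ec i < b)) (iota 0 (size s)).
Proof.
move=> b0; rewrite /yE opp_formula //; apply: eq_in_count => i.
rewrite mem_iota add0n => /andP[_ hi].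
rewrite /Ec.
by congr (_ && (_ < _)); [case: (sn i) | apply: eq_count => x; case: x].
Qed.


Lemma count_split (A : pred nat) (f : nat -> nat) a b l : a <= b ->
  count (fun i => A i && (f i < b)) l =
  count (fun i => A i && (f i < a)) l + count (fun i => A i && (a <= f i < b)) l.
Proof.
move=> ab; elim: l => [|x l IH] //=; rewrite IH.
case: (A x) => /=; last by [].
case h1: (f x < a); case h2: (f x < b); case h3: (a <= f x) => /=; lia.
Qed.

Variable n : nat.
Hypothesis D : dyck n s.

Lemma sizeD : size s = n + n. Proof. by case: D. Qed.
Lemma dyck_le i : i <= size s -> Ec i <= Nc i.
Proof. by case: D => _ _ h /h. Qed.
Lemma count_idD : count id s = n. Proof. by case: D. Qed.
Lemma count_negbD : count negb s = n.
Proof. have := count_predC id s; rewrite sizeD count_idD; change (count (predC id) s) with (count negb s); lia. Qed.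
Lemma Ec_le i : Ec i <= n.
Proof.
rewrite -count_negbD /Ec -{2}(cat_take_drop i s) count_cat; exact: leq_addr.
Qed.
Lemma head_true : 0 < n -> s = true :: behead s.
Proof.
move=> n0; have hs : 0 < size s by rewrite sizeD; lia.
have h1 := dyck_le 1 hs; have h2 := NcEc 1 hs; have h3 := NcS 0 hs.
have e0 : Nc 0 = 0 by rewrite /Nc take0.
rewrite e0 add0n in h3.
have hsn : sn 0 = true.
  case e: (sn 0) => //; rewrite e in h3; lia.
move: hs hsn; clear; case: s => [|c t] //= _ -> //.
Qed.
Lemma xN0 : 0 < n -> xN s 0 = 0.
Proof. by move=> n0; rewrite /xN (head_true n0). Qed.
Lemma xN_all b : 0 < n ->
  xN s b = count (fun i => ~~ sn i && (Nc i < b)) (iota 0 (size s)).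
Proof.
move=> n0; case: b => [|b]; last exact: xN_form.
rewrite xN0 // (eq_count (a2 := pred0)) ?count_pred0 // => i /=.
by rewrite ltn0 andbF.
Qed.
Lemma yE_last : yE s n.+1 = n.
Proof.
rewrite yE_form //; transitivity (count id (take (size s) s)).
  rewrite -count_pos //; apply: eq_count => i /=; by rewrite ltnS Ec_le andbT.
by rewrite take_size count_idD.
Qed.
Lemma j_ge k : 1 <= k <= n -> k <= yE s k.+1.
Proof.
move=> hk; rewrite yE_form //.
have hq : k + k <= size s by rewrite sizeD; lia.
apply: leq_trans _ (@count_lower (fun p => sn p) (fun p => Ec p < k.+1) _ hq _); last first.
  move=> p hp; have := dyck_le p (ltnW (leq_trans hp hq)).
  have := NcEc p (ltnW (leq_trans hp hq)); lia.
rewrite (@count_pos id _ hq); have := @dyck_le _ hq; have := @NcEc _ hq.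
rewrite /Nc; lia.
Qed.

Lemma find_valley p i : i < p -> p < size s -> ~~ sn i -> sn p ->
  exists i', [/\ i <= i' < p, ~~ sn i' & sn i'.+1].
Proof.
elim: p i => [|p IH] i //= hip hp hi hP.
case: (eqVneq i p) => [e|ne]; first by rewrite -e in hP; exists i; split => //; rewrite leqnn hip.
case hsp: (sn p).
- have [i' [h1 h2 h3]] := IH i (ltac:(lia)) (ltac:(lia)) hi hsp.
  exists i'; split => //; lia.
- exists p; rewrite hsp hP; split => //; lia.
Qed.

Lemma lhs_char k : 1 <= k <= n ->
  (xN s (yE s k.+1) = xN s k.-1) <->
  (forall i, i.+1 < size s -> ~~ sn i -> sn i.+1 -> ~~ (Ec i <= k.-1 <= Nc i)).
Proof.
move=> hk; have n0 : 0 < n by lia.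
set j := yE s k.+1; have hj : k.-1 <= j by have := @j_ge k hk; lia.
rewrite !xN_all // (count_split _ _ _ _ _ hj).
have -> : (count (fun i => ~~ sn i && (Nc i < k.-1)) (iota 0 (size s)) +
  count (fun i => ~~ sn i && (k.-1 <= Nc i < j)) (iota 0 (size s)) =
  count (fun i => ~~ sn i && (Nc i < k.-1)) (iota 0 (size s))) <->
  (count (fun i => ~~ sn i && (k.-1 <= Nc i < j)) (iota 0 (size s)) = 0).
  split; lia.
split.
- move=> /eqP; rewrite -leqn0 leqNgt -has_count => /hasPn H i hi hni hsi.
  apply/negP => /andP[h1 h2].
  have := H i; rewrite mem_iota add0n (ltnW hi) /= => /(_ isT).
  rewrite hni h2 /=; apply/negP; rewrite negbK.
  rewrite /j yE_form //.
  apply: leq_trans _ (@count_lower (fun p => sn p) (fun p => Ec p < k.+1) _ hi _); last first.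
    move=> p hp; have := @Ec_mono p i.+1 (ltac:(lia)).
    rewrite EcS; last by lia.
    rewrite hni; lia.
  have e : count (nth false s) (iota 0 i.+2) = Nc i.+2 by exact: (@count_pos id _ hi).
  rewrite e NcS // NcS; last by lia.
  rewrite (negbTE hni) hsi /=; lia.
- move=> H; apply/eqP; rewrite -leqn0 leqNgt -has_count; apply/hasPn => i.
  rewrite mem_iota add0n => /andP[_ hi]; apply/negP => /andP[hni /andP[h1 h2]].
  move: h2; rewrite /j yE_form //.
  rewrite -(subnKC (ltnW hi)) iotaD count_cat => h2.
  have h3 : count (fun i0 => sn i0 && (Ec i0 < k.+1)) (iota 0 i) <= Nc i.
    rewrite /Nc -(@count_pos id _ (ltnW hi)); apply: sub_count => p /= /andP[] //.
  have : has (fun i0 => sn i0 && (Ec i0 < k.+1)) (iota (0 + i) (size s - i)).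
    rewrite has_count; lia.
  move=> /hasP [p]; rewrite mem_iota add0n subnKC; last exact: ltnW.
  move=> /andP[hip hps] /andP[hsp hEp].
  have hip' : i < p by rewrite ltn_neqAle hip andbT; apply/eqP => e; move: hni; rewrite e hsp.
  have [i' [/andP[h4 h5] h6 h7]] := @find_valley p i hip' hps hni hsp.
  have := H i' (ltac:(lia)) h6 h7; apply/negP/negPn.
  have e1 := @Ec_mono i'.+1 p h5; rewrite EcS in e1; last by lia.
  rewrite h6 in e1.
  have e2 := @Nc_mono _ _ h4; apply/andP; split; lia.
Qed.


Lemma count_AB (T : Type) (a b : pred T) l :
  count a l = count (fun x => a x && b x) l + count (fun x => a x && ~~ b x) l.
Proof. elim: l => //= x l ->; case: (a x); case: (b x) => /=; lia. Qed.

Lemma count_mem_iota (X : seq nat) m : uniq X ->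
  count (mem X) (iota 1 m) = count (mem (iota 1 m)) X.
Proof.
move=> uX; rewrite -!size_filter; apply: perm_size; apply: uniq_perm.
- exact: filter_uniq (iota_uniq _ _).
- exact: filter_uniq.
- by move=> x; rewrite !mem_filter andbC.
Qed.

Lemma valleysE : valleys s =
  [seq (Ec i.+1, Nc i.+2) | i <- [seq i <- iota 0 (size s).-1 | ~~ sn i && sn i.+1]].
Proof.
rewrite /valleys; congr map; apply: eq_in_filter => i.
rewrite mem_iota add0n => /andP[_ hi].
by rewrite (set_nth_default false true (n := i)) //; lia.
Qed.

Lemma memV p : p \in valleys s <->
  exists i, [/\ i.+1 < size s, ~~ sn i, sn i.+1 & p = (Ec i + 1, Nc i + 1)].
Proof.
rewrite valleysE; split.
- case/mapP => i; rewrite mem_filter mem_iota add0n => /andP[/andP[h1 h2] /andP[_ h3]] ->.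
  have hi : i.+1 < size s by lia.
  exists i; split => //.
  rewrite EcS ?NcS; try lia. by rewrite (negbTE h1) h2 addn0.
- case=> i [h1 h2 h3 ->]; apply/mapP; exists i.
    by rewrite mem_filter mem_iota add0n h2 h3 /=; lia.
  rewrite EcS ?NcS; try lia. by rewrite (negbTE h2) h3 addn0.
Qed.

Lemma V_lt p : p \in valleys s -> 1 <= p.1 < p.2.
Proof.
case/memV => i [h1 h2 h3 ->] /=.
have := @dyck_le i.+1 (ltnW h1); rewrite EcS ?NcS; try lia.
Qed.

Lemma uniq_fst : uniq (map fst (valleys s)).
Proof.
rewrite valleysE -map_comp map_inj_in_uniq.
  exact: filter_uniq (iota_uniq _ _).
have key : forall i i', i \in [seq i <- iota 0 (size s).-1 | ~~ sn i && sn i.+1] ->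
    i < i' -> i' \in [seq i <- iota 0 (size s).-1 | ~~ sn i && sn i.+1] ->
    Ec i.+1 < Ec i'.+1.
  move=> i i'; rewrite !mem_filter !mem_iota => /andP[/andP[h1 _] _] hii /andP[/andP[h2 _] /andP[_ h3]].
  rewrite (@EcS i'); last by lia.
  rewrite h2; have := @Ec_mono i.+1 i' hii; lia.
move=> i i' hi hi' /= e; case: (ltngtP i i') => // c.
- by have := key _ _ hi c hi'; rewrite e ltnn.
- by have := key _ _ hi' c hi; rewrite e ltnn.
Qed.

Lemma uniq_snd : uniq (map snd (valleys s)).
Proof.
rewrite valleysE -map_comp map_inj_in_uniq.
  exact: filter_uniq (iota_uniq _ _).
have key : forall i i', i \in [seq i <- iota 0 (size s).-1 | ~~ sn i && sn i.+1] ->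
    i < i' -> i' \in [seq i <- iota 0 (size s).-1 | ~~ sn i && sn i.+1] ->
    Nc i.+2 < Nc i'.+2.
  move=> i i'; rewrite !mem_filter !mem_iota => /andP[/andP[h1 h1'] _] hii /andP[/andP[h2 h2'] /andP[_ h3]].
  rewrite (@NcS i'.+1); last by lia.
  rewrite h2'; have := @Nc_mono i.+2 i'.+1 hii; lia.
move=> i i' hi hi' /= e; case: (ltngtP i i') => // c.
- by have := key _ _ hi c hi'; rewrite e ltnn.
- by have := key _ _ hi' c hi; rewrite e ltnn.
Qed.


Definition rowsV := map snd (valleys s).
Definition colsV := map fst (valleys s).
Definition FF := [seq j <- iota 1 n | j \notin rowsV].

Lemma vrow_none c : (valley_row s c == None) = (c \notin colsV).
Proof.
rewrite /valley_row /colsV; elim: (valleys s) => [|p V IH] //=.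
rewrite in_cons; case: (eqVneq p.1 c) => [<-|ne] /=; first by [].
exact: IH.
Qed.

Lemma vrow_some c l : valley_row s c = Some l -> (c, l) \in valleys s.
Proof.
rewrite /valley_row; elim: (valleys s) => [|p V IH] //=.
case: (eqVneq p.1 c) => [<-|ne] /=.
  by case=> <-; rewrite in_cons -surjective_pairing eqxx.
by move/IH; rewrite in_cons orbC => ->.
Qed.

Lemma fill_spec cs used m c :
  [seq j <- iota 1 n | j \notin used] = drop m FF -> c \in cs -> uniq cs ->
  head 0 [seq p.2 | p <- bjs_fill s n cs used & p.1 == c] =
  match valley_row s c with
  | Some l => l
  | None => nth 0 FF (m + count (fun c' => valley_row s c' == None) (take (index c cs) cs))
  end.
Proof.
have uF : uniq FF by exact: filter_uniq (iota_uniq _ _).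
elim: cs used m => [|i cs IH] used m //= hinv.
rewrite in_cons => hc /andP[hi ucs].
case: (eqVneq c i) => [->|ne].
  rewrite take0 /= addn0.
  case: (valley_row s i) => [l|] /=; first by rewrite eqxx.
  by rewrite eqxx /= hinv -nth0 nth_drop addn0.
have hc' : c \in cs by move: hc; rewrite (negbTE ne).
have ne' : (i == c) = false by apply/eqP => e; move: ne; rewrite e eqxx.
case ev: (valley_row s i) => [l|] /=.
- by rewrite ne' /= (IH used m) // ev.
- rewrite ne' /= (IH _ m.+1) //.
  + by rewrite ev /=; case: (valley_row s c) => //; rewrite addSnnS add1n.
  + set r := head 0 _.
    have -> : [seq j <- iota 1 n | j \notin r :: used] =
              [seq j <- [seq j <- iota 1 n | j \notin used] | predC1 r j].
      rewrite -filter_predI; apply: eq_filter => j /=.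
      by rewrite in_cons negb_or.
    rewrite /r hinv; have ud := drop_uniq m uF.
    case E: (drop m FF) ud => [|x t] /= ud.
      by rewrite -[m.+1]add1n -drop_drop E.
    rewrite eqxx /=.
    have -> : [seq j <- t | j != x] = t.
      apply/all_filterP/allP => y hy; apply/eqP => e; move: ud; rewrite -e hy.
      by case/andP.
    by rewrite -add1n -drop_drop E /= drop0.
Qed.


Lemma iota_split k : 1 <= k <= n -> iota 1 n = iota 1 k.-1 ++ k :: iota k.+1 (n - k).
Proof.
move=> hk; rewrite -{1}(@subnKC k.-1 n) ?iotaD; last by lia.
have -> : n - k.-1 = (n - k).+1 by lia.
have -> : 1 + k.-1 = k by lia.
by [].
Qed.

Lemma bjs_spec k : 1 <= k <= n -> bjs_perm s n k =
  match valley_row s k with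
  | Some l => l
  | None => nth 0 FF (count (fun c' => valley_row s c' == None) (iota 1 k.-1))
  end.
Proof.
move=> hk; rewrite /bjs_perm /bjs_crosses (@fill_spec _ _ 0).
- rewrite add0n (@iota_split k hk) index_cat.
  have -> : (k \in iota 1 k.-1) = false by rewrite mem_iota; apply/negbTE; lia.
  by rewrite /= eqxx addn0 take_size_cat // size_iota.
- by rewrite drop0.
- rewrite mem_iota; lia.
- exact: iota_uniq.
Qed.

Lemma nthFF t k : 1 <= k <= n -> (nth 0 FF t == k) =
  (k \notin rowsV) && (t == count (fun j => j \notin rowsV) (iota 1 k.-1)).
Proof.
move=> hk; have uF : uniq FF by exact: filter_uniq (iota_uniq _ _).
case hk': (k \in rowsV) => /=.
- apply/negbTE/eqP => e; case: (ltnP t (size FF)) => ht.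
    by have := mem_nth 0 ht; rewrite e mem_filter hk'.
  by move: e; rewrite nth_default //; lia.
- have kF : k \in FF by rewrite mem_filter hk' mem_iota; lia.
  have hidx : index k FF = count (fun j => j \notin rowsV) (iota 1 k.-1).
    rewrite /FF (@iota_split k hk) filter_cat index_cat mem_filter mem_iota.
    have -> : (1 <= k < 1 + k.-1) = false by apply/negbTE; lia.
    by rewrite andbF /= hk' /= eqxx addn0 size_filter.
  rewrite -hidx; case: (ltnP t (size FF)) => ht.
    by rewrite -{1}(nth_index 0 kF) nth_uniq // index_mem.
  rewrite nth_default //; have := index_mem k FF; rewrite kF => hi.
  have -> : (0 == k) = false by apply/eqP; lia.
  have -> : (t == index k FF) = false by apply/eqP; lia.
  by [].
Qed.

Lemma cnt_notin (X : seq nat) m :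
  count (fun j => j \notin X) (iota 1 m) = m - count (mem X) (iota 1 m).
Proof.
have := count_predC (mem X) (iota 1 m); rewrite size_iota.
change (count (predC (mem X)) (iota 1 m)) with (count (fun j => j \notin X) (iota 1 m)).
lia.
Qed.

Lemma cnt_cols m : count (mem colsV) (iota 1 m) = count (fun p => p.1 < m.+1) (valleys s).
Proof.
rewrite count_mem_iota ?uniq_fst // /colsV count_map; apply: eq_in_count => p hp /=.
rewrite mem_iota add1n; by case/andP: (@V_lt p hp) => -> _.
Qed.

Lemma cnt_rows m : count (mem rowsV) (iota 1 m) = count (fun p => p.2 < m.+1) (valleys s).
Proof.
rewrite count_mem_iota ?uniq_snd // /rowsV count_map; apply: eq_in_count => [[a b]] hp /=.
rewrite mem_iota; move: (@V_lt _ hp) => /= hv; apply/idP/idP; lia.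
Qed.

Lemma rhs_char k : 1 <= k <= n ->
  (bjs_perm s n k = k) <-> ~~ has (fun p => p.1 <= k <= p.2) (valleys s).
Proof.
move=> hk; rewrite bjs_spec //; case ev: (valley_row s k) => [l|].
  have hv := @vrow_some k l ev; have /= hl := @V_lt _ hv.
  split => [e|h]; first lia.
  exfalso; move/hasPn: h => /(_ _ hv) /negP; apply; apply/andP; split => /=; lia.
have kc : k \notin colsV by rewrite -vrow_none ev.
have pk : k.-1.+1 = k by lia.
set t := count _ (iota 1 k.-1).
have ht : t = k.-1 - count (fun p => p.1 < k) (valleys s).
  rewrite /t (eq_count (a2 := fun j => j \notin colsV)); last by move=> j; rewrite vrow_none.
  by rewrite cnt_notin cnt_cols pk.
have hr : count (fun j => j \notin rowsV) (iota 1 k.-1) =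
          k.-1 - count (fun p => p.2 < k) (valleys s).
  by rewrite cnt_notin cnt_rows pk.
have cA : count (fun p => p.1 < k) (valleys s) <= k.-1.
  by rewrite -pk -cnt_cols; apply: leq_trans (count_size _ _) _; rewrite size_iota.
have rA : count (fun p => p.2 < k) (valleys s) <= k.-1.
  by rewrite -pk -cnt_rows; apply: leq_trans (count_size _ _) _; rewrite size_iota.
have split_c : count (fun p => p.1 < k) (valleys s) = count (fun p => p.2 < k) (valleys s)
   + count (fun p => (p.1 < k) && ~~ (p.2 < k)) (valleys s).
  rewrite (@count_AB _ _ (fun p : nat * nat => p.2 < k)); congr (_ + _); apply: eq_in_count => [[a b]] hp /=.
  move: (@V_lt _ hp) => /= hv; apply/idP/idP; lia.
split.
- move=> /eqP; rewrite nthFF // => /andP[kr /eqP e].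
  have c0 : count (fun p => (p.1 < k) && ~~ (p.2 < k)) (valleys s) = 0 by lia.
  apply/hasPn => [[a b]] hp /=; apply/negP => /andP[h1 h2].
  case: (ltngtP a k) => [c1|c1|c1]; last first.
  + by move: kc; rewrite -c1 /colsV; apply/negP/negPn; apply: (map_f fst hp).
  + lia.
  case: (ltngtP b k) => [c2|c2|c2]; first lia; last first.
    by move: kr; rewrite -c2 /rowsV; apply/negP/negPn; apply: (map_f snd hp).
  have : has (fun p => (p.1 < k) && ~~ (p.2 < k)) (valleys s).
    by apply/hasP; exists (a, b) => //=; rewrite c1 /= -leqNgt ltnW.
  by rewrite has_count c0.
- move/hasPn => H; apply/eqP; rewrite nthFF //; apply/andP; split.
  + apply/negP => /mapP [[a b] hp /= e]; have := H _ hp; have := @V_lt _ hp; rewrite /= -e.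
    move=> h1 /negP; apply; apply/andP; split => /=; lia.
  + have c0 : count (fun p => (p.1 < k) && ~~ (p.2 < k)) (valleys s) = 0.
      apply/eqP; rewrite -leqn0 leqNgt -has_count; apply/hasPn => [[a b]] hp /=.
      apply/negP => /andP[h1 h2]; have := H _ hp => /negP; apply; apply/andP; split => /=; lia.
    apply/eqP; rewrite ht hr; lia.
Qed.

End S.

Theorem mainTheorem4 (n : nat) (s : seq bool) :
  dyck n s ->
  forall k : nat, (1 <= k <= n)%N ->
    (row_area s `|(k.+1%:Z + col_area s n k.+1)%R|%N
       = (row_area s k.-1 + col_area s n k.+1 + 2)%R
     <-> bjs_perm s n k = k).
Proof.
move=> D k hk.
have n0 : (0 < n)%N by lia.
have hc : col_area s n k.+1 = ((yE s k.+1)%:Z - (k.+1)%:Z)%R.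
  rewrite /col_area; case: eqP => [e|//].
  have ek : k = n by lia.
  rewrite ek (@yE_last s n D); lia.
have hr : forall m, row_area s m = (m%:Z - 1 - (xN s m)%:Z)%R.
  move=> [|m] //; rewrite /row_area /= (@xN0 s n D n0); lia.
have habs : `|(k.+1%:Z + col_area s n k.+1)%R|%N = yE s k.+1.
  rewrite hc; have -> : ((k.+1)%:Z + ((yE s k.+1)%:Z - (k.+1)%:Z) = (yE s k.+1)%:Z)%R by lia.
  by [].
rewrite habs !hr hc.
have -> : ((yE s k.+1)%:Z - 1 - (xN s (yE s k.+1))%:Z =
   (k.-1)%:Z - 1 - (xN s k.-1)%:Z + ((yE s k.+1)%:Z - (k.+1)%:Z) + 2)%R <->
   xN s (yE s k.+1) = xN s k.-1.
  split => h; lia.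
rewrite (@lhs_char s n D k hk) (@rhs_char s n D k hk).
split.
- move=> H; apply/hasPn => p /memV [i [h1 h2 h3 ->]] /=.
  have := H i h1 h2 h3; apply: contra => /andP[a b]; apply/andP; split; lia.
- move=> /hasPn H i h1 h2 h3.
  have hv : (Ec s i + 1, Nc s i + 1) \in valleys s by apply/memV; exists i.
  have := H _ hv; apply: contra => /andP[a b]; apply/andP; split => /=; lia.
Qed.
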